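(* Let $\Pi_{\mathfrak l}\subset\Pi$ be admissible and let $\tau$ be an even permutation of $\Pi$ which is an automorphism of the Dynkin diagram and coincides with $-w_{\mathfrak l}$ on $\Pi_{\mathfrak l}$; extend $\tau$ linearly to $\mathfrak h^*$ and put $\tilde\mu=w_{\mathfrak l}\tau(\mu)$ for $\mu\in\bar\Pi_{\mathfrak l}$. Suppose $(\mu+\tilde\mu,\alpha)=0$ for all $\mu\in\bar\Pi_{\mathfrak l}$, $\alpha\in\Pi_{\mathfrak l}$. Then $\tau\circ w_{\mathfrak l}=w_{\mathfrak l}\circ\tau$ on the root lattice $\mathbb Z\Pi$.
   Context: Setting: $\mathfrak g$ is one of $\mathfrak{gl}(N|2\mathbf m)$, $\mathfrak{osp}(2\mathbf n+1|2\mathbf m)$, $\mathfrak{osp}(2\mathbf n|2\mathbf m)$, $\mathfrak{spo}(2\mathbf n|2\mathbf m)$ with natural module $V=\mathbb C^{N|2\mathbf m}$, homogeneous weight basis $v_1,\dots,v_{N+2\mathbf m}$ of weights $\zeta_1,\dots,\zeta_{N+2\mathbf m}$, $|v_i|=1$ iff $i\le\mathbf m$ or $i>\mathbf m+N$; $i'=N+2\mathbf m+1-i$; standard form $(\varepsilon_i,\varepsilon_j)=\delta_{ij}=-(\delta_i,\delta_j)$, $(\varepsilon_i,\delta_j)=0$ on $\mathfrak h^*$; standard simple roots $\Pi$ ($\delta_i-\delta_{i+1}$, $\delta_{\mathbf m}-\varepsilon_1$, $\varepsilon_i-\varepsilon_{i+1}$, then $\varepsilon_N-\delta_{\mathbf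 m+1},\dots,\delta_{2\mathbf m-1}-\delta_{2\mathbf m}$ for $\mathfrak{gl}$, or tail root $\varepsilon_{\mathbf n}$, $\varepsilon_{\mathbf n-1}+\varepsilon_{\mathbf n}$, $2\varepsilon_{\mathbf n}$ respectively); $\bar\Pi_{\mathfrak l}=\Pi\setminus\Pi_{\mathfrak l}$. An operator on $\mathfrak h^*$ is even if it maps even roots to even roots and odd to odd. For $\Pi_{\mathfrak l}\subset\Pi$, $\mathfrak l=\bigoplus_i\mathfrak l_i$ is generated by $e_{\pm\alpha}$, $\alpha\in\Pi_{\mathfrak l}$, $\mathfrak l_i$ acting naturally on the span of basis vectors $v_{j_1},\dots,v_{j_r}$ ($j_1<\dots<j_r$), $\hat{\mathfrak l}_i$ its $\mathfrak{gl}$-extension if of type A; $w_{\mathfrak l_i}$ is the linear operator $\zeta_{j_s}\mapsto\zeta_{j_{r+1-s}}$ fixing other $\zeta_j$ ($j,j'\notin\{j_1,..,j_r\}$), and $w_{\mathfrak l}=\prod_iw_{\mathfrak l_i}$. $\Pi_{\mathfrak l}$ is admissible if the grading induced on each span of $v_{j_1},\dots,v_{j_r}$ is symmetric ($|v_{j_s}|=|v_{j_{r+1-s}}|$) with minimal number of odd simple roots of $\hat{\mathfrak l}_i$ among symmetric gradings. *)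

(* Defs.v *)
From HB Require Import structures.
From mathcomp Require Import all_boot all_order all_algebra all_fingroup.
From mathcomp Require Import zify.
Set Implicit Arguments. Unset Strict Implicit. Unset Printing Implicit Defensive.
Import Order.TTheory GRing.Theory Num.Theory.
Local Open Scope ring_scope.

(* The four families: GL = gl(N|2m) (k = N), TB = osp(2k+1|2m),
   TD = osp(2k|2m), TC = spo(2k|2m). *)
Inductive gtype := GL | TB | TD | TC.

Definition gtype_eqb (a b : gtype) : bool :=
  match a, b with GL, GL | TB, TB | TD, TD | TC, TC => true | _, _ => false end.

Section Defs.
Variables (t : gtype) (k m : nat).

(* N = dimension of the even part of V *)
Definition Ncard : nat :=
  match t with GL => k | TB => (k.*2).+1 | _ => k.*2 end.
(* number of basis vectors v_1..v_{N+2m} (we index them 0..Dn-1) *)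
Definition Dn : nat := (Ncard + m.*2)%N.
(* dim h^* : coordinates are the independent weights
   (gl: zeta_1..zeta_{N+2m}; osp: delta_1..delta_m, eps_1..eps_k) *)
Definition hdim : nat := match t with GL => Dn | _ => (m + k)%N end.
Definition nr : nat := match t with GL => Dn.-1 | _ => (m + k)%N end.

Definition valid : Prop :=
  match t with GL => (1 <= k)%N | TB => (1 <= k)%N | TC => (1 <= k)%N
  | TD => (2 <= k)%N end.

(* parity |v_j| of the (0-based) basis vector v_j *)
Definition par (j : nat) : bool := (j < m)%N || (m + Ncard <= j)%N.

Definition ecoord (c : nat) : 'rV[rat]_hdim := \row_(i < hdim) ((i == c :> nat)%:R).

(* the weight zeta_j of v_j (0-based), with j' = Dn - 1 - j *)
Definition zeta (j : nat) : 'rV[rat]_hdim :=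
  match t with
  | GL => ecoord j
  | _ => if (j < m + k)%N then ecoord j
         else if gtype_eqb t TB && (j == m + k)%N then 0
         else - ecoord (Dn.-1 - j)
  end.

Definition alpha (p : nat) : 'rV[rat]_hdim :=
  match t with
  | GL => zeta p - zeta p.+1
  | TB => if (p.+1 < m + k)%N then zeta p - zeta p.+1 else zeta p
  | TD => if (p.+1 < m + k)%N then zeta p - zeta p.+1 else zeta p.-1 + zeta p
  | TC => if (p.+1 < m + k)%N then zeta p - zeta p.+1 else 2%:R *: zeta p
  end.

(* the standard bilinear form: (eps_i,eps_j) = delta_ij = -(delta_i,delta_j) *)
Definition bform (x y : 'rV[rat]_hdim) : rat :=
  \sum_(c < hdim) (if par c then -1 else 1) * x 0 c * y 0 c.

(* roots of g, with parity b (true = odd) *)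
Definition isRoot (x : 'rV[rat]_hdim) (b : bool) : Prop :=
  match t with
  | GL => exists i j : 'I_Dn, i != j /\ x = zeta i - zeta j /\ (par i != par j) = b
  | _ => (exists i j : 'I_Dn, (i < j)%N /\ zeta i + zeta j != 0 /\
            x = zeta i + zeta j /\ (par i (+) par j) = b)
      \/ (exists i : 'I_Dn, (if gtype_eqb t TC then ~~ par i else par i) /\
            zeta i != 0 /\ x = 2%:R *: zeta i /\ b = false)
  end.

Definition evenOp (T : 'M[rat]_hdim) : Prop :=
  forall x b, isRoot x b -> isRoot (x *m T) b.

Definition inZPi (x : 'rV[rat]_hdim) : Prop :=
  exists c : 'I_nr -> int, x = \sum_(p < nr) (c p)%:~R *: alpha p.

(* pairs of indices of basis vectors joined by simple root p
   (the natural module of the component of l containing p) *)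
Definition linkpairs (p : nat) : seq (nat * nat) :=
  match t with
  | GL => [:: (p, p.+1)]
  | _ => if (p.+1 < m + k)%N then [:: (p, p.+1); (Dn.-1 - p.+1, Dn.-1 - p)%N]
         else match t with
              | TB => [:: (p, p.+1); (p.+1, p.+2)]
              | TC => [:: (p, p.+1)]
              | TD => [:: (p.-1, p.+1); (p, p.+2)]
              | GL => [::]
              end
  end.

Definition linked (S : {set 'I_nr}) : rel 'I_Dn := fun j l =>
  [exists p : 'I_nr, (p \in S) &&
     (((val j, val l) \in linkpairs p) || ((val l, val j) \in linkpairs p))].

Definition block (S : {set 'I_nr}) (j : 'I_Dn) : seq 'I_Dn :=
  [seq l <- enum 'I_Dn | connect (linked S) j l].

Definition wperm (S : {set 'I_nr}) (j : 'I_Dn) : 'I_Dn :=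
  let c := block S j in nth j (rev c) (index j c).

Lemma hdim_le : (hdim <= Dn)%N.
Proof. rewrite /hdim /Dn /Ncard; case: t; rewrite -!addnn; lia. Qed.

(* w_l as a matrix: row c is w_l(coordinate c) = zeta_{w(c)} *)
Definition Wl (S : {set 'I_nr}) : 'M[rat]_hdim :=
  \matrix_(c < hdim, i < hdim) (zeta (wperm S (widen_ord hdim_le c))) 0 i.

(* number of odd simple roots of gl(V_J) for the ordered parity sequence *)
Definition changes (s : seq bool) : nat :=
  count (fun i => nth false s i != nth false s i.+1) (iota 0 (size s).-1).

(* block closed under j -> j' : orthosymplectic (non-type-A) component *)
Definition ospBlock (c : seq 'I_Dn) : bool :=
  ~~ gtype_eqb t GL &&
  all (fun l : 'I_Dn => has (fun l' : 'I_Dn => val l' == (Dn.-1 - val l)%N) c) c.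

Definition admissible (S : {set 'I_nr}) : Prop :=
  forall j : 'I_Dn,
    let s := [seq par (val l) | l <- block S j] in
    rev s = s /\
    (~~ ospBlock (block S j) ->
       forall tt : (size s).-tuple bool, rev tt = tt -> count id tt = count id s ->
         (changes s <= changes tt)%N).

End Defs.

(* Main.v *)
Require Import Defs.
From HB Require Import structures.
From mathcomp Require Import all_boot all_order all_algebra all_fingroup.
From mathcomp Require Import zify ring.
Set Implicit Arguments. Unset Strict Implicit. Unset Printing Implicit Defensive.
Import Order.TTheory GRing.Theory Num.Theory.
Local Open Scope ring_scope.
Section Abstract.
Variables (n nr : nat) (al : 'I_nr -> 'rV[rat]_n) (W T D : 'M[rat]_n).

Definition Bf (x y : 'rV[rat]_n) : rat := (x *m D *m y^T) 0 0.
Definition inspan (S : {set 'I_nr}) (u : 'rV[rat]_n) :=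
  exists c : 'I_nr -> rat, u = \sum_(s in S) c s *: al s.

Lemma BfDl x y z : Bf (x + y) z = Bf x z + Bf y z.
Proof. by rewrite /Bf !mulmxDl mxE. Qed.
Lemma BfDr x y z : Bf z (x + y) = Bf z x + Bf z y.
Proof. by rewrite /Bf linearD /= mulmxDr mxE. Qed.
Lemma BfNl x z : Bf (- x) z = - Bf x z.
Proof. by rewrite /Bf !mulNmx mxE. Qed.
Lemma BfNr x z : Bf z (- x) = - Bf z x.
Proof. by rewrite /Bf linearN /= mulmxN mxE. Qed.
Lemma BfZr a x z : Bf z (a *: x) = a * Bf z x.
Proof. by rewrite /Bf linearZ /= -scalemxAr mxE. Qed.
Lemma BfBl x y z : Bf (x - y) z = Bf x z - Bf y z.
Proof. by rewrite BfDl BfNl. Qed.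
Lemma BfBr x y z : Bf z (x - y) = Bf z x - Bf z y.
Proof. by rewrite BfDr BfNr. Qed.

Lemma span_ind (S : {set 'I_nr}) (P : 'rV[rat]_n -> Prop) u :
  P 0 -> (forall x y, P x -> P y -> P (x + y)) ->
  (forall a s, s \in S -> P (a *: al s)) -> inspan S u -> P u.
Proof.
move=> P0 PD PZ [c ->]; apply: (big_ind P) => // s sS; exact: PZ.
Qed.

Lemma inspanD S x y : inspan S x -> inspan S y -> inspan S (x + y).
Proof.
move=> [c ->] [d ->]; exists (fun s => c s + d s).
by rewrite -big_split /=; apply: eq_bigr => s _; rewrite scalerDl.
Qed.
Lemma inspanN S x : inspan S x -> inspan S (- x).
Proof.
move=> [c ->]; exists (fun s => - c s).
by rewrite -sumrN; apply: eq_bigr => s _; rewrite scaleNr.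
Qed.
Lemma inspan_al (S : {set 'I_nr}) s : s \in S -> inspan S (al s).
Proof.
move=> sS; exists (fun r => (r == s)%:R).
rewrite (bigD1 s) //= eqxx scale1r big1 ?addr0 // => r /andP[_ /negbTE ->].
by rewrite scale0r.
Qed.


Lemma inspan0 S : inspan S 0.
Proof. by exists (fun _ => 0); rewrite big1 // => s _; rewrite scale0r. Qed.
Lemma inspanZ S a x : inspan S x -> inspan S (a *: x).
Proof.
move=> [c ->]; exists (fun s => a * c s).
by rewrite scaler_sumr; apply: eq_bigr => s _; rewrite scalerA.
Qed.
Lemma inspan_sum S (I : finType) (F : I -> 'rV[rat]_n) :
  (forall i, inspan S (F i)) -> inspan S (\sum_i F i).
Proof.
move=> h; apply: (big_ind (inspan S)) => //; [exact: inspan0 | exact: inspanD].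
Qed.

Variables (S : {set 'I_nr}) (tau : {perm 'I_nr}).
Hypotheses (WW : W *m W = 1)
  (Wiso : forall x y, Bf (x *m W) (y *m W) = Bf x y)
  (Wspan : forall x : 'rV[rat]_n, inspan S (x - x *m W))
  (indep : forall S' r, inspan S' (al r) -> r \in S')
  (nondeg : forall v, (forall x, Bf v x = 0) -> v = 0)
  (alT : forall p, al p *m T = al (tau p))
  (gram : forall p q, Bf (al (tau p)) (al (tau q)) = Bf (al p) (al q))
  (tauW : forall p, p \in S -> al (tau p) = - (al p *m W))
  (cond : forall p q, p \notin S -> q \in S -> Bf (al p + al (tau p) *m W) (al q) = 0).

Lemma xWW (x : 'rV[rat]_n) : x *m W *m W = x.
Proof. by rewrite -mulmxA WW mulmx1. Qed.

Lemma tauS p : p \in S -> tau p \in S.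
Proof.
move=> pS; apply: indep; rewrite tauW //.
have -> : - (al p *m W) = (al p - al p *m W) + - al p by rewrite addrC addKr.
by apply: inspanD; [apply: Wspan | apply/inspanN/inspan_al].
Qed.

Lemma al_inj : injective al.
Proof.
move=> p q e; have : p \in [set q] by apply: indep; rewrite e; apply: inspan_al; rewrite inE.
by rewrite inE => /eqP.
Qed.

Lemma tau2 p : p \in S -> tau (tau p) = p.
Proof.
move=> pS; apply: al_inj; rewrite tauW ?tauS // tauW // mulNmx opprK xWW //.
Qed.

Lemma spanT u : inspan S u -> u *m T = - (u *m W).
Proof.
apply: (span_ind (P := fun u : 'rV[rat]_n => u *m T = - (u *m W))).
- by rewrite !mul0mx oppr0.
- by move=> x y hx hy; rewrite !mulmxDl hx hy opprD.
- by move=> a s sS; rewrite -!scalemxAl alT tauW // scalerN.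
Qed.

Lemma abstract_main p : al p *m W *m T = al p *m T *m W.
Proof.
case: (boolP (p \in S)) => pS.
  have e : al p *m W = - al (tau p) by rewrite tauW // opprK.
  by rewrite e mulNmx alT alT tau2 // tauW // mulNmx xWW.
set a := al p; set b := al (tau p).
have eaW : a *m W = a + (a *m W - a) by rewrite addrC subrK.
have hu : inspan S (a *m W - a).
  by have := inspanN (Wspan a); rewrite opprB.
have e1 : a *m W *m T = b - a + a *m W.
  rewrite {1}eaW mulmxDl alT (spanT hu) mulmxBl xWW.
  by apply/rowP => i; rewrite !mxE; ring.
set f := a *m W *m T - a *m T *m W.
have ef : f = (b - b *m W) - (a - a *m W) by rewrite /f e1 alT; rewrite -/b; apply/rowP => i; rewrite !mxE; ring.
have fW : f *m W = - f by rewrite ef !mulmxBl !xWW; apply/rowP => i; rewrite !mxE; ring.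
have fq : forall q, q \in S -> Bf f (al q) = 0.
  move=> q qS; have c := cond pS qS; rewrite BfDl in c.
  rewrite ef !BfBl.
  have h1 : Bf a (al q *m W) = - Bf a (al (tau q)).
    by rewrite (_ : al q *m W = - al (tau q)) ?BfNr // tauW // opprK.
  have h2 : Bf (a *m W) (al q) = - Bf a (al (tau q)).
    by rewrite -Wiso xWW h1.
  have h3 : Bf b (al q) = Bf a (al (tau q)) by rewrite /b -{1}(tau2 qS) gram.
  rewrite h2 h3; rewrite -/a -/b in c.
  have : Bf a (al q) = - Bf (b *m W) (al q) by rewrite -[RHS]add0r -c; ring.
  move=> ->; ring.
apply/eqP; rewrite -subr_eq0 -/f; apply/eqP/nondeg => x.
have hx : Bf f (x - x *m W) = 0.
  apply: (span_ind (P := fun u => Bf f u = 0)) (Wspan x) => //.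
  - by rewrite /Bf linear0 mulmx0 mxE.
  - by move=> y z hy hz; rewrite BfDr hy hz addr0.
  - by move=> c s sS; rewrite BfZr fq // mulr0.
have e2 : Bf f (x *m W) = - Bf f x by rewrite -Wiso xWW fW BfNl.
have : Bf f x = - Bf f x.
  by move: hx; rewrite BfBr e2 => /eqP; rewrite subr_eq0 => /eqP.
move=> /eqP; rewrite -subr_eq0 opprK -mulr2n mulrn_eq0 /= => /eqP //.
Qed.
End Abstract.
Section Sig.
Variable (T : eqType).
Implicit Types (c : seq T) (j : T).
Definition sig c j := nth j (rev c) (index j c).

Lemma sigE c j : j \in c -> sig c j = nth j c (size c - (index j c).+1).
Proof. by move=> jc; rewrite /sig nth_rev // index_mem. Qed.

Lemma sig_lt c j : j \in c -> (size c - (index j c).+1 < size c)%N.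
Proof. move=> jc; have := index_mem j c; rewrite jc; lia. Qed.

Lemma sig_mem c j : j \in c -> sig c j \in c.
Proof. by move=> jc; rewrite sigE // mem_nth // sig_lt. Qed.

Lemma index_sig c j : uniq c -> j \in c -> index (sig c j) c = (size c - (index j c).+1)%N.
Proof. by move=> u jc; rewrite sigE // index_uniq // sig_lt. Qed.

Lemma sig_inv c j : uniq c -> j \in c -> sig c (sig c j) = j.
Proof.
move=> u jc; rewrite (sigE (sig_mem jc)) index_sig //.
have hi := index_mem j c; rewrite jc in hi.
rewrite (_ : (size c - (size c - (index j c).+1).+1 = index j c)%N); last lia.
by rewrite (set_nth_default j) ?nth_index // index_mem.
Qed.

Lemma sig_par (g : T -> bool) c j : rev (map g c) = map g c -> j \in c -> g (sig c j) = g j.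
Proof.
move=> hr jc; have hi := index_mem j c; rewrite jc in hi.
rewrite sigE // -(nth_map j (g j)) ?sig_lt //.
rewrite -(size_map g) -nth_rev ?size_map // hr (nth_map j) //.
by rewrite nth_index.
Qed.

End Sig.

Lemma sig_map (T U : eqType) (f : T -> U) c j : injective f -> uniq c -> j \in c ->
  sig (rev (map f c)) (f j) = f (sig c j).
Proof.
move=> fi u jc; have hi := index_mem j c; rewrite jc in hi.
have u' : uniq (rev (map f c)) by rewrite rev_uniq map_inj_uniq.
have e : f j = nth (f j) (rev (map f c)) (size c - (index j c).+1).
  rewrite nth_rev ?size_map ?sig_lt //.
  rewrite (_ : (size c - (size c - (index j c).+1).+1 = index j c)%N); last lia.
  by rewrite (nth_map j) // nth_index.
rewrite /sig revK {2}e index_uniq ?size_rev ?size_map ?sig_lt //.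
by rewrite (nth_map j) ?sig_lt // -sigE.
Qed.
Lemma DnE t k m : Dn t k m = match t with GL => k + 2 * m | TB => 2 * k + 1 + 2 * m | _ => 2 * k + 2 * m end%N.
Proof. rewrite /Dn /Ncard; case: t; rewrite -!addnn; lia. Qed.

Ltac bsplit := repeat match goal with
   | |- context [ @eq_op _ ?x ?y ] => case: (@eqP _ x y) => ?
   | |- context [ (?x < ?y)%N ] => case: (ltnP x y) => ?
   | |- context [ (?x <= ?y)%N ] => case: (leqP x y) => ?
   end.

Section Conc.
Variables (t : gtype) (k m : nat).
Hypothesis Hvalid : valid t k.
Local Notation hd := (hdim t k m).
Local Notation DN := (Dn t k m).
Local Notation NR := (nr t k m).
Local Notation zeta := (zeta t k m).
Local Notation ecoord := (ecoord t k m).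
Local Notation alpha := (alpha t k m).
Definition osp := ~~ gtype_eqb t GL.

Lemma hdE : hd = if osp then (m + k)%N else DN.
Proof. by rewrite /osp /hdim; case: t. Qed.

Lemma ecoordE c i : ecoord c 0 i = (i == c :> nat)%:R.
Proof. by rewrite mxE. Qed.

Lemma ecoord_out c : (hd <= c)%N -> ecoord c = 0.
Proof.
move=> h; apply/rowP => i; rewrite ecoordE mxE; case: eqP => // e.
by move: (ltn_ord i); rewrite e ltnNge h.
Qed.

Lemma zeta_lt (j : nat) : (j < hd)%N -> zeta j = ecoord j.
Proof. by rewrite /zeta /hdim; case: t => // ->. Qed.

Lemma zeta_rev j : osp -> (j < DN)%N -> zeta (DN.-1 - j) = - zeta j.
Proof.
rewrite /osp /zeta DnE; case: t Hvalid => //= hv _ hj;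
  repeat case: ifP => ? //; rewrite ?opprK ?oppr0 ?subr0 //;
  try (congr (- _)); try (f_equal; lia); lia.
Qed.

Lemma zeta_mid : t = TB -> zeta (m + k) = 0.
Proof. by move=> ->; rewrite /zeta /= ltnn eqxx. Qed.

Lemma nrE : NR = if osp then (m + k)%N else DN.-1.
Proof. by rewrite /osp /nr; case: t. Qed.

Lemma link_alpha p a b : (p < NR)%N -> (a, b) \in linkpairs t k m p ->
  zeta a - zeta b = alpha p.
Proof.
move=> hp; have hr := zeta_rev; have hm := zeta_mid; move: hp hr hm.
rewrite nrE /osp /linkpairs /alpha; case: t Hvalid => hv hp hr hm; rewrite /= in hp hv; try done.
- by rewrite inE => /eqP [-> ->].
- case: ifP => h1.
    rewrite !inE => /orP[] /eqP [-> ->] //.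
    rewrite (hr _ isT); last by rewrite DnE; lia.
    rewrite (hr _ isT); last by rewrite DnE; lia.
    by rewrite opprK addrC.
  rewrite !inE => /orP[] /eqP [-> ->].
    by rewrite (_ : p.+1 = m + k)%N ?(hm erefl) ?subr0 //; lia.
  rewrite (_ : p.+1 = m + k)%N ?(hm erefl) ?sub0r; last lia.
  rewrite (_ : (m + k).+1 = (Dn TB k m).-1 - p)%N ?(hr _ isT) ?opprK //; rewrite DnE; lia.
- case: ifP => h1.
    rewrite !inE => /orP[] /eqP [-> ->] //.
    rewrite (hr _ isT); last by rewrite DnE; lia.
    rewrite (hr _ isT); last by rewrite DnE; lia.
    by rewrite opprK addrC.
  rewrite !inE => /orP[] /eqP [-> ->].
    rewrite (_ : p.+1 = (Dn TD k m).-1 - p)%N ?(hr _ isT) ?opprK //; rewrite DnE; lia.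
  rewrite (_ : p.+2 = (Dn TD k m).-1 - p.-1)%N; last by rewrite DnE; lia.
  rewrite (hr _ isT); last by rewrite DnE; lia.
  by rewrite opprK addrC.
- case: ifP => h1.
    rewrite !inE => /orP[] /eqP [-> ->] //.
    rewrite (hr _ isT); last by rewrite DnE; lia.
    rewrite (hr _ isT); last by rewrite DnE; lia.
    by rewrite opprK addrC.
  rewrite !inE => /eqP [-> ->].
  rewrite (_ : p.+1 = (Dn TC k m).-1 - p)%N ?(hr _ isT) ?opprK; last by rewrite DnE; lia.
  by rewrite scaler_nat mulr2n.
  by rewrite DnE; lia.
Qed.

Variable S : {set 'I_NR}.
Local Notation lk := (linked S).

Lemma linked_sym : symmetric lk.
Proof. by move=> x y; rewrite /linked; apply: eq_existsb => p; rewrite orbC. Qed.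
Lemma csym : connect_sym lk.
Proof. exact: sym_connect_sym linked_sym. Qed.
Lemma mem_block j l : (l \in block S j) = connect lk j l.
Proof. by rewrite mem_filter mem_enum andbT. Qed.
Lemma block_uniq j : uniq (block S j).
Proof. exact/filter_uniq/enum_uniq. Qed.
Lemma block_sorted j : sorted (fun x y : 'I_DN => (val x < val y)%N) (block S j).
Proof.
apply: sorted_filter; first by move=> ? ? ?; apply: ltn_trans.
by have := iota_ltn_sorted 0 DN; rewrite -val_enum_ord sorted_map.
Qed.
Lemma block_same j l : connect lk j l -> block S l = block S j.
Proof. by move=> h; apply: eq_filter => x; rewrite (same_connect csym h). Qed.
Lemma wpermE j : wperm S j = sig (block S j) j.
Proof. by []. Qed.
Lemma wperm_conn j : connect lk j (wperm S j).
Proof. by rewrite wpermE -mem_block sig_mem // mem_block connect0. Qed.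
Lemma wpermK : involutive (wperm S).
Proof.
move=> j; rewrite [wperm S (wperm S j)]wpermE (block_same (wperm_conn j)).
by rewrite wpermE sig_inv ?block_uniq // mem_block connect0.
Qed.
Lemma wperm_par : admissible S -> forall j, par t k m (wperm S j) = par t k m j.
Proof.
move=> adm j; have [hr _] := adm j.
rewrite wpermE (sig_par (g := fun l : 'I_DN => par t k m l)) //.
by rewrite mem_block connect0.
Qed.

Lemma link_rev p a b : osp -> (p < NR)%N -> (a, b) \in linkpairs t k m p ->
  (DN.-1 - b, DN.-1 - a)%N \in linkpairs t k m p.
Proof.
rewrite nrE /osp /linkpairs DnE; case: t Hvalid => hv //= _ hp.
- case: ifP => h1; rewrite !inE !xpair_eqE => /orP[] /andP[/eqP -> /eqP ->]; lia.
- case: ifP => h1; rewrite !inE !xpair_eqE => /orP[] /andP[/eqP -> /eqP ->]; lia.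
- case: ifP => h1; rewrite !inE !xpair_eqE.
    move=> /orP[] /andP[/eqP -> /eqP ->]; lia.
  move=> /andP[/eqP -> /eqP ->]; lia.
Qed.

Lemma linked_rev a b : osp -> lk a b -> lk (rev_ord a) (rev_ord b).
Proof.
move=> o /existsP [p /andP [pS h]]; apply/existsP; exists p; rewrite pS /=.
have e : forall x : 'I_DN, (DN - x.+1 = DN.-1 - x)%N by move=> x; have := ltn_ord x; lia.
rewrite !e; case/orP: h => h; apply/orP; [right|left]; exact: link_rev.
Qed.

Lemma connect_rev a b : osp -> connect lk a b -> connect lk (rev_ord a) (rev_ord b).
Proof.
move=> o /connectP [q pq ->] {b}; elim: q a pq => [|x q IH] a /=; first by rewrite connect0.
move=> /andP [h pq]; apply: connect_trans (connect1 (linked_rev o h)) (IH _ pq).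
Qed.

Lemma block_rev j : osp -> block S (rev_ord j) = rev (map (@rev_ord DN) (block S j)).
Proof.
move=> o; apply: (irr_sorted_eq (leT := fun x y : 'I_DN => (val x < val y)%N)).
- by move=> ? ? ?; apply: ltn_trans.
- by move=> ?; rewrite ltnn.
- exact: block_sorted.
- rewrite rev_sorted sorted_map; apply: sub_sorted (block_sorted j) => x y /=.
  by have := ltn_ord x; have := ltn_ord y; lia.
- move=> x; rewrite mem_rev -{2}(rev_ordK x) (mem_map rev_ord_inj) !mem_block.
  apply/idP/idP => h.
    by rewrite -[j]rev_ordK; apply: connect_rev.
  by rewrite -[x]rev_ordK; apply: connect_rev.
Qed.

Lemma wperm_rev j : osp -> wperm S (rev_ord j) = rev_ord (wperm S j).
Proof.
move=> o; rewrite wpermE block_rev // sig_map //; first exact: rev_ord_inj.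
  exact: block_uniq.
by rewrite mem_block connect0.
Qed.

Local Notation W := (Wl S).

Lemma ecoord_delta (i : 'I_hd) : ecoord i = delta_mx 0 i.
Proof. by apply/rowP => c; rewrite !mxE. Qed.

Lemma rowW (i : 'I_hd) : row i W = zeta (wperm S (widen_ord (hdim_le t k m) i)).
Proof. by apply/rowP => c; rewrite !mxE. Qed.

Lemma DN_osp : osp -> ((m + k).*2 <= DN <= (m + k).*2.+1)%N.
Proof. by rewrite /osp DnE; case: t => //= _; rewrite -!addnn; lia. Qed.

Lemma zeta_rev_ord (j : 'I_DN) : osp -> zeta (rev_ord j) = - zeta j.
Proof.
move=> o; rewrite (_ : nat_of_ord (rev_ord j) = DN.-1 - j)%N ?zeta_rev //=.
by have := ltn_ord j; lia.
Qed.

Lemma selfneg (x : 'rV[rat]_hd) : x = - x -> x = 0.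
Proof.
move=> h; apply/rowP => i; have := congr1 (fun v : 'rV[rat]_hd => v 0 i) h.
by rewrite !mxE => /eqP; rewrite -subr_eq0 opprK -mulr2n mulrn_eq0 /= => /eqP.
Qed.

Lemma zetaW_lt (j : 'I_DN) : (j < hd)%N -> zeta j *m W = zeta (wperm S j).
Proof.
move=> hj; rewrite (zeta_lt hj) (ecoord_delta (Ordinal hj)) -rowE rowW.
by congr (zeta (val (wperm S _))); apply: val_inj.
Qed.

Lemma zetaW (j : 'I_DN) : zeta j *m W = zeta (wperm S j).
Proof.
case: (ltnP j hd) => hj; first exact: zetaW_lt.
have o : osp.
  by move: hj; rewrite hdE; case: osp => //; rewrite leqNgt ltn_ord.
case: (ltnP (rev_ord j) hd) => hj'.
  have e : zeta j = - zeta (rev_ord j) by rewrite zeta_rev_ord // opprK.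
  rewrite e mulNmx zetaW_lt // wperm_rev // zeta_rev_ord // opprK //.
have ejj : rev_ord j = j.
  apply: val_inj => /=; move: hj hj' (DN_osp o) (ltn_ord j); rewrite hdE o /=.
  rewrite -!addnn; lia.
have z0 : zeta j = 0 by apply: selfneg; rewrite -{1}ejj zeta_rev_ord.
have z1 : zeta (wperm S j) = 0.
  by apply: selfneg; rewrite -zeta_rev_ord // -wperm_rev // ejj.
by rewrite z0 z1 mul0mx.
Qed.

Lemma WW : W *m W = 1.
Proof.
apply/row_matrixP => i; rewrite row_mul rowW zetaW wpermK row1 -ecoord_delta.
by rewrite /= zeta_lt.
Qed.

Definition sgn (x : nat) : rat := if par t k m x then -1 else 1.
Definition Dm : 'M[rat]_hd := diag_mx (\row_(c < hd) sgn c).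

Lemma bformE x y : bform x y = Bf Dm x y.
Proof.
rewrite /bform /Bf /Dm mul_mx_diag !mxE; apply: eq_bigr => c _; rewrite !mxE /sgn; ring.
Qed.

Lemma bform_ecoord (x y : nat) :
  bform (ecoord x) (ecoord y) = ((x == y) && (x < hd)%N)%:R * sgn x.
Proof.
rewrite /bform; case: (ltnP x hd) => hx.
  rewrite (bigD1 (Ordinal hx)) //= big1 ?addr0.
    rewrite !ecoordE /= eqxx /sgn; case: eqP => [->|_]; rewrite ?eqxx /=; ring.
  move=> c /eqP hc; rewrite !ecoordE; case: eqP => e; last by rewrite mulr0 mul0r.
  by exfalso; apply: hc; apply: val_inj.
rewrite big1 ?andbF ?mul0r // => c _; rewrite !ecoordE; case: eqP => e; last by rewrite mulr0 mul0r.
by move: (ltn_ord c); rewrite e ltnNge hx.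
Qed.

Lemma par_rev (j : nat) : (j < DN)%N -> par t k m (DN.-1 - j) = par t k m j.
Proof.
rewrite /par /Dn => h; apply/idP/idP; case/orP => h1; apply/orP; lia.
Qed.

Lemma zeta_ecoord (a : 'I_DN) :
  zeta a = if (a < hd)%N then ecoord a else - ecoord (DN.-1 - a).
Proof.
case: ltnP => ha; first exact: zeta_lt.
have o : osp by move: ha; rewrite hdE; case: osp => //; rewrite leqNgt ltn_ord.
have er : nat_of_ord (rev_ord a) = (DN.-1 - a)%N by rewrite /=; have := ltn_ord a; lia.
case: (ltnP (DN.-1 - a) hd) => ha'.
  by rewrite -(opprK (zeta a)) -zeta_rev_ord // er zeta_lt.
have ejj : rev_ord a = a.
  apply: val_inj => /=; move: ha ha' (DN_osp o) (ltn_ord a); rewrite hdE o /=.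
  rewrite -!addnn; lia.
rewrite ecoord_out // oppr0; apply: selfneg; by rewrite -{1}ejj zeta_rev_ord.
Qed.

Lemma bformNl (x y : 'rV[rat]_hd) : bform (- x) y = - bform x y.
Proof. by rewrite !bformE BfNl. Qed.
Lemma bformNr (x y : 'rV[rat]_hd) : bform x (- y) = - bform x y.
Proof. by rewrite !bformE BfNr. Qed.

Lemma Gform (a b : 'I_DN) : bform (zeta a) (zeta b) =
  sgn a * ((a == b)%:R - (osp && (a == rev_ord b))%:R).
Proof.
have hA := ltn_ord a; have hB := ltn_ord b.
have eab : (a == b) = (val a == val b) by [].
have ear : (a == rev_ord b) = (val a == DN - b.+1)%N by [].
rewrite eab ear !zeta_ecoord.
have hdo := hdE; have dno := DN_osp.
case o: osp hdo dno => /= hdo dno.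
  have {}dno := dno isT; rewrite -!addnn in dno.
  case: ltnP => ha; case: ltnP => hb;
  rewrite ?bformNl ?bformNr ?opprK !bform_ecoord /sgn ?par_rev //;
  bsplit; rewrite /=; try (exfalso; lia); ring.
have ha : (a < hd)%N by rewrite hdo.
have hb : (b < hd)%N by rewrite hdo.
rewrite ha hb !bform_ecoord /sgn /=; bsplit; rewrite /=; try (exfalso; lia); ring.
Qed.

Lemma Ginv : admissible S -> forall a b : 'I_DN,
  bform (zeta (wperm S a)) (zeta (wperm S b)) = bform (zeta a) (zeta b).
Proof.
move=> adm a b; rewrite !Gform /sgn wperm_par // (inj_eq (can_inj wpermK)).
case o: osp => //=; by rewrite -wperm_rev // (inj_eq (can_inj wpermK)).
Qed.

Lemma entryABt n (A B M : 'M[rat]_n) i j :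
  (A *m M *m B^T) i j = (row i A *m M *m (row j B)^T) 0 0.
Proof.
rewrite !mxE; apply: eq_bigr => l _; rewrite !mxE; congr (_ * _).
by apply: eq_bigr => c _; rewrite !mxE.
Qed.

Lemma WDW : admissible S -> W *m Dm *m W^T = Dm.
Proof.
move=> adm; apply/matrixP => i j; rewrite entryABt !rowW -/(Bf Dm _ _) -bformE Ginv //.
rewrite /= !zeta_lt // bform_ecoord /Dm !mxE ltn_ord andbT.
by rewrite mulr_natl.
Qed.

Lemma Wiso : admissible S -> forall x y, Bf Dm (x *m W) (y *m W) = Bf Dm x y.
Proof.
move=> adm x y; rewrite /Bf trmx_mul !mulmxA -(mulmxA x W) -(mulmxA x (W *m Dm)).
by rewrite WDW.
Qed.

Definition alf (p : 'I_NR) := alpha p.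

Lemma bform_e (v : 'rV[rat]_hd) (i : 'I_hd) : bform v (ecoord i) = sgn i * v 0 i.
Proof.
rewrite /bform (bigD1 i) //= big1 ?addr0.
  by rewrite ecoordE eqxx /sgn mulr1.
move=> c /eqP hc; rewrite ecoordE; case: eqP => e; last by rewrite mulr0.
by exfalso; apply: hc; apply: val_inj.
Qed.

Lemma nondeg (v : 'rV[rat]_hd) : (forall x, Bf Dm v x = 0) -> v = 0.
Proof.
move=> h; apply/rowP => i; have := h (ecoord i); rewrite -bformE bform_e mxE.
by move/eqP; rewrite mulf_eq0 /sgn; case: ifP => _ /=; rewrite ?oppr_eq0 ?oner_eq0 /= => /eqP.
Qed.

Lemma conn_span (a b : 'I_DN) : connect lk a b -> inspan alf S (zeta a - zeta b).
Proof.
move/connectP => [q pq ->] {b}; elim: q a pq => [|x q IH] a /=.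
  by move=> _; rewrite subrr; apply: inspan0.
move=> /andP [h pq]; have := IH _ pq => h2.
rewrite (_ : zeta a - zeta (last x q) = (zeta a - zeta x) + (zeta x - zeta (last x q))); last first.
  by rewrite addrA subrK.
apply: inspanD => //.
case/existsP: h => p /andP [pS /orP []] h.
  by rewrite (link_alpha (ltn_ord p) h); apply: inspan_al.
rewrite -opprB (link_alpha (ltn_ord p) h); apply/inspanN; exact: inspan_al.
Qed.

Lemma Wspan (x : 'rV[rat]_hd) : inspan alf S (x - x *m W).
Proof.
rewrite {1 2}(row_sum_delta x) mulmx_suml -sumrB; apply: inspan_sum => i.
rewrite -scalemxAl -scalerBr; apply: inspanZ.
rewrite -ecoord_delta (_ : ecoord i = zeta (widen_ord (hdim_le t k m) i)); last first.
  by rewrite /= zeta_lt.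
rewrite zetaW; apply: conn_span; exact: wperm_conn.
Qed.
End Conc.

Definition phiw t k m (r i : nat) : rat := match t with
 | GL => if (i <= r)%N then 1 else 0
 | TB => if (r.+1 < m + k)%N then (if (i <= r)%N then 1 else 0) else 1
 | TC => if (r.+1 < m + k)%N then (if (i <= r)%N then 1 else 0) else 2^-1
 | TD => if (r.+2 < m + k)%N then (if (i <= r)%N then 1 else 0)
         else if (r.+2 == m + k)%N then (if (i <= r)%N then 2^-1 else - 2^-1) else 2^-1
 end.
Definition pcol t k m r : 'cV[rat]_(hdim t k m) := \col_(i < hdim t k m) phiw t k m r i.
Definition phi t k m r (x : 'rV[rat]_(hdim t k m)) := (x *m pcol t k m r) 0 0.

Section Phi.
Variables (t : gtype) (k m r : nat).
Local Notation hd := (hdim t k m).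
Lemma phiD (x y : 'rV[rat]_hd) : phi r (x + y) = phi r x + phi r y.
Proof. by rewrite /phi mulmxDl mxE. Qed.
Lemma phiB (x y : 'rV[rat]_hd) : phi r (x - y) = phi r x - phi r y.
Proof. by rewrite /phi mulmxBl !mxE. Qed.
Lemma phiZ a (x : 'rV[rat]_hd) : phi r (a *: x) = a * phi r x.
Proof. by rewrite /phi -scalemxAl mxE. Qed.
Lemma phi_e (i : nat) : (i < hd)%N -> phi r (ecoord t k m i) = phiw t k m r i.
Proof.
move=> h; rewrite (ecoord_delta (Ordinal h)) /phi -rowE !mxE //.
Qed.
End Phi.

Lemma phi_alpha t k m (hv : valid t k) (r s : nat) : (r < nr t k m)%N -> (s < nr t k m)%N ->
  phi r (alpha t k m s) = (s == r)%:R.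
Proof.
case: t hv => hv hr hs; rewrite /alpha.
- rewrite /nr DnE in hr hs.
  rewrite !zeta_lt; try by rewrite /hdim DnE; lia.
  rewrite phiB !phi_e; try by rewrite /hdim DnE; lia.
  rewrite /phiw; bsplit; try (exfalso; lia); rewrite /=; by field.
- rewrite /nr in hr hs; rewrite /= in hv.
  case: ifP => h1.
    rewrite !zeta_lt; try by rewrite /hdim; lia.
    rewrite phiB !phi_e; try by rewrite /hdim; lia.
    rewrite /phiw; bsplit; try (exfalso; lia); rewrite /=; by field.
  rewrite !zeta_lt; try by rewrite /hdim; lia.
  rewrite !phi_e; try by rewrite /hdim; lia.
  rewrite /phiw; bsplit; try (exfalso; lia); rewrite /=; by field.
- rewrite /nr in hr hs; rewrite /= in hv.
  case: ifP => h1.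
    rewrite !zeta_lt; try by rewrite /hdim; lia.
    rewrite phiB !phi_e; try by rewrite /hdim; lia.
    rewrite /phiw; bsplit; try (exfalso; lia); rewrite /=; by field.
  rewrite !zeta_lt; try by rewrite /hdim; lia.
  rewrite phiD !phi_e; try by rewrite /hdim; lia.
  rewrite /phiw; bsplit; try (exfalso; lia); rewrite /=; by field.
- rewrite /nr in hr hs; rewrite /= in hv.
  case: ifP => h1.
    rewrite !zeta_lt; try by rewrite /hdim; lia.
    rewrite phiB !phi_e; try by rewrite /hdim; lia.
    rewrite /phiw; bsplit; try (exfalso; lia); rewrite /=; by field.
  rewrite !zeta_lt; try by rewrite /hdim; lia.
  rewrite phiZ !phi_e; try by rewrite /hdim; lia.
  rewrite /phiw; bsplit; try (exfalso; lia); rewrite /=; by field.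
Qed.



Lemma indepL t k m (hv : valid t k) (S' : {set 'I_(nr t k m)}) (r : 'I_(nr t k m)) :
  inspan (@alf t k m) S' (alf r) -> r \in S'.
Proof.
case=> c e; have := congr1 (phi r) e.
rewrite /alf phi_alpha ?ltn_ord // eqxx /phi mulmx_suml summxE.
under eq_bigr => s _ do rewrite -scalemxAl mxE -/(phi r (alpha t k m s)) phi_alpha ?ltn_ord //.
case: (boolP (r \in S')) => // rS.
rewrite big1 => [/eqP|s sS]; first by rewrite oner_eq0.
by rewrite (_ : (s == r :> nat) = false) ?mulr0 //; apply/negbTE; apply: contra rS => /eqP h;
  rewrite (_ : r = s) //; apply: val_inj.
Qed.

Theorem mainTheorem5 (t : gtype) (k m : nat) (Hvalid : valid t k)
  (S : {set 'I_(nr t k m)}) (tau : {perm 'I_(nr t k m)})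
  (T : 'M[rat]_(hdim t k m)) :
  admissible S ->
  (forall p : 'I_(nr t k m), alpha t k m p *m T = alpha t k m (tau p)) ->
  evenOp T ->
  (forall p q : 'I_(nr t k m),
     bform (alpha t k m (tau p)) (alpha t k m (tau q)) = bform (alpha t k m p) (alpha t k m q)) ->
  (forall p, p \in S -> alpha t k m (tau p) = - (alpha t k m p *m Wl S)) ->
  (forall p q, p \notin S -> q \in S ->
     bform (alpha t k m p + alpha t k m (tau p) *m Wl S) (alpha t k m q) = 0) ->
  forall x, inZPi x -> x *m Wl S *m T = x *m T *m Wl S.
Proof.
move=> adm halT _ hgram htau hcond x [c ->].
have key : forall p, alf p *m Wl S *m T = alf p *m T *m Wl S.
  apply: (@abstract_main _ _ (@alf t k m) (Wl S) T (Dm t k m) S tau).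
  - exact: WW.
  - exact: Wiso.
  - exact: Wspan.
  - move=> S' r; exact: indepL.
  - exact: nondeg.
  - exact: halT.
  - by move=> p q; rewrite /alf -!bformE.
  - exact: htau.
  - by move=> p q pS qS; rewrite /alf -bformE; apply: hcond.
rewrite !mulmx_suml; apply: eq_bigr => p _; rewrite -!scalemxAl.
by have := key p; rewrite /alf => ->.
Qed.
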